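(* Let ${\bold H}$ be a function with domain $\omega$ such that each ${\bold H}(i)$ is a countable set with at least two elements, and let $(K,\Sigma,\Sigma^\bot)$ be a semi--creating triple for ${\bold H}$ which is linked, semi--gluing and has the cutting property. Then the forcing notion $\mathbb{Q}^+_\infty(K,\Sigma,\Sigma^\bot)$ is $\sigma$-$*$--linked.
   Context: A semi--creature for ${\bold H}$ is a quadruple $t=(\mathbf{dom}[t],\mathbf{sval}[t],\mathbf{nor}[t],\mathbf{dis}[t])$ with $\mathbf{dom}[t]$ a non-empty finite subset of $\omega$, $\emptyset\neq\mathbf{sval}[t]\subseteq\prod_{i\in\mathbf{dom}[t]}{\bold H}(i)$, $\mathbf{nor}[t]\in[0,\infty)\cup\{\infty\}$, $\mathbf{dis}[t]$ hereditarily countable, and $\mathbf{sval}[t]=\prod_{i\in\mathbf{dom}[t]}{\bold H}(i)$ iff $\mathbf{nor}[t]=\infty$. A semi--composition operation $\Sigma$ on a set $K$ of semi--creatures maps finite subsets of $K$ to subsets of $K$ with: (a) if $s\in\Sigma(\mathcal S_s)$ for all $s\in\mathcal S$ then $\Sigma(\mathcal S)\subseteq\Sigma(\bigcup_s\mathcal S_s)$; (b) $t\in\Sigma(\{t\})$, $\Sigma(\emptyset)=\emptyset$; (c) if $t\in\Sigma(\mathcal S)$ then $\mathbf{dom}[t]=\bigcup_{s\in\mathcal S}\mathbf{dom}[s]$, $v\restriction\mathbf{dom}[s]\in\mathbf{sval}[s]$ for $v\in\mathbf{sval}[t]$, $s\in\mathcal S$, and distinct members of $\mathcal S$ have disjoint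 domains. A semi--decomposition operation $\Sigma^\bot$ assigns to each $t\in K$ a non-empty family of finite subsets of $K$ with: (a) if $\{s_0,\dots,s_k\}\in\Sigma^\bot(t)$ and $\mathcal S_i\in\Sigma^\bot(s_i)$ then $\bigcup_i\mathcal S_i\in\Sigma^\bot(t)$; (b) $\{t\}\in\Sigma^\bot(t)$; (c) if $\mathcal S\in\Sigma^\bot(t)$ then $\mathbf{dom}[t]=\bigcup_{s\in\mathcal S}\mathbf{dom}[s]$ and each $v\in\prod_{i\in\mathbf{dom}[t]}{\bold H}(i)$ with $v\restriction\mathbf{dom}[s]\in\mathbf{sval}[s]$ for all $s\in\mathcal S$ is in $\mathbf{sval}[t]$. $(K,\Sigma,\Sigma^\bot)$ is then a semi--creating triple. Conditions of $\mathbb{Q}^+_\infty(K,\Sigma,\Sigma^\bot)$ are sequences $p=(w^p,t^p_0,t^p_1,\dots)$ with $w^p$ a finite function, $w^p(i)\in{\bold H}(i)$, $t^p_i\in K$, $\mathrm{dom}(w^p)$ and the $\mathbf{dom}[t^p_i]$ partitioning $\omega$, $\mathbf{nor}[t^p_i]\neq\infty$ for all $i$ and $\lim_i\mathbf{nor}[t^p_i]=\infty$. $p\leq q$ ($q$ stronger) iff $q$ arises from $p$ by finitely many operations: deciding the value (for a finite $A\subseteq\omega$, extend $w$ to $w^*$ with domain $\mathrm{dom}(w)\cup\bigcup_{i\in A}\mathbf{dom}[t_i]$, $w^*\restriction\mathbf{dom}[t_i]\in\mathbf{sval}[t_i]$ for $i\in A$, and keep exactly the $t_i$, $i\notin A$);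 applying $\Sigma$ (replace the sequence by $t^*_i\in\Sigma(\{t_j:j\in A_i\})$ for pairwise disjoint finite $A_i\subseteq\omega$); applying $\Sigma^\bot$ (new sequence $t^*_j$ with pairwise disjoint non-empty finite $A_i$ and $\{t^*_j:j\in A_i\}\in\Sigma^\bot(t_i)$); results of operations must be conditions. The triple is linked if for all $t_0,t_1\in K$ with $\mathbf{nor}[t_0],\mathbf{nor}[t_1]>1$ and $\mathbf{dom}[t_0]=\mathbf{dom}[t_1]$ there is $s\in\Sigma(\{t_0\})\cap\Sigma(\{t_1\})$ with $\mathbf{nor}[s]\geq\min\{\mathbf{nor}[t_0],\mathbf{nor}[t_1]\}-1$. It is semi--gluing if for all $t_0,\dots,t_n\in K$ with pairwise disjoint domains there is $s\in\Sigma(\{t_0,\dots,t_n\})$ with $\mathbf{nor}[s]\geq\min_k\mathbf{nor}[t_k]-1$. It has the cutting property if for every $t\in K$ with $\mathbf{nor}[t]>1$ and every non-empty proper subset $z$ of $\mathbf{dom}[t]$ there are $s_0,s_1\in K$ with $\mathbf{dom}[s_0]=z$, $\mathbf{dom}[s_1]=\mathbf{dom}[t]\setminus z$, $\mathbf{nor}[s_\ell]\geq\mathbf{nor}[t]-1$ ($\ell=0,1$) and $\{s_0,s_1\}\in\Sigma^\bot(t)$. A forcing notion $\mathbb{Q}$ is $\sigma$-$*$--linked if for every $n\in\omega$ there is a partition $\langle A_i:i\in\omega\rangle$ of $\mathbb{Q}$ such that any $q_0,\dots,q_n$ lying in one $A_i$ have a common upper bound in $\mathbb{Q}$. *)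

(* Defs.v *)
From HB Require Import structures.
From mathcomp Require Import all_boot all_order all_algebra.
From mathcomp Require Import all_classical all_reals all_analysis.
From Stdlib Require Import Relations.Relation_Operators.

Set Implicit Arguments.
Unset Strict Implicit.
Unset Printing Implicit Defensive.

Import Order.TTheory GRing.Theory Num.Theory.
Local Open Scope classical_set_scope.
Local Open Scope ereal_scope.

Section Creatures.
Variables (R : realType) (H : nat -> countType) (D : Type).

(* partial functions: v i = None means i is not in the domain;
   v i = Some x means v(i) = x, with x in H(i) *)
Definition pval := forall i : nat, option (H i).
Definition pdom (v : pval) : set nat := [set i | v i <> None].
(* the product  prod_{i in A} H(i)  as a set of partial functions *)
Definition prodH (A : set nat) : set pval := [set v | pdom v = A].
Definition restr (A : set nat) (v : pval) : pval :=
  fun i => if `[< A i >] then v i else None.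

Record screature := SCreature {
  sdom : set nat; ssval : set pval; snor : \bar R; sdis : D }.

Definition is_semi_creature (t : screature) : Prop :=
  [/\ finite_set (sdom t), sdom t !=set0, ssval t !=set0,
      ssval t `<=` prodH (sdom t) &
      (0 <= snor t) /\ (ssval t = prodH (sdom t) <-> snor t = +oo)].

Definition semi_composition (K : set screature)
    (Sig : set screature -> set screature) : Prop :=
  [/\ (forall S, finite_set S -> S `<=` K -> Sig S `<=` K),
      (forall S (F : screature -> set screature), finite_set S -> S `<=` K ->
         (forall s, S s -> [/\ finite_set (F s), F s `<=` K & Sig (F s) s]) ->
         Sig S `<=` Sig (\bigcup_(s in S) F s)),
      (forall t, K t -> Sig [set t] t),
      Sig set0 = set0 &
      (forall S t, finite_set S -> S `<=` K -> Sig S t ->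
         [/\ sdom t = \bigcup_(s in S) sdom s,
             (forall v s, ssval t v -> S s -> ssval s (restr (sdom s) v)) &
             (forall s1 s2, S s1 -> S s2 -> s1 <> s2 ->
                sdom s1 `&` sdom s2 = set0)])].

Definition semi_decomposition (K : set screature)
    (Sb : screature -> set (set screature)) : Prop :=
  [/\ (forall t, K t ->
         Sb t !=set0 /\ (forall S, Sb t S -> finite_set S /\ S `<=` K)),
      (forall t S (F : screature -> set screature), K t -> Sb t S ->
         (forall s, S s -> Sb s (F s)) -> Sb t (\bigcup_(s in S) F s)),
      (forall t, K t -> Sb t [set t]) &
      (forall t S, K t -> Sb t S ->
         sdom t = \bigcup_(s in S) sdom s /\
         (forall v, prodH (sdom t) v ->
            (forall s, S s -> ssval s (restr (sdom s) v)) -> ssval t v))].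

Definition semi_creating_triple (K : set screature)
    (Sig : set screature -> set screature)
    (Sb : screature -> set (set screature)) : Prop :=
  [/\ (forall t, K t -> is_semi_creature t),
      semi_composition K Sig & semi_decomposition K Sb].

Definition linked (K : set screature) (Sig : set screature -> set screature) :=
  forall t0 t1, K t0 -> K t1 -> 1%:E < snor t0 -> 1%:E < snor t1 ->
    sdom t0 = sdom t1 ->
    exists s, [/\ Sig [set t0] s, Sig [set t1] s &
                  Order.min (snor t0) (snor t1) - 1%:E <= snor s].

Definition semi_gluing (K : set screature) (Sig : set screature -> set screature) :=
  forall (n : nat) (ts : nat -> screature),
    (forall k, (k <= n)%N -> K (ts k)) ->
    (forall k l, (k <= n)%N -> (l <= n)%N -> k <> l ->
       sdom (ts k) `&` sdom (ts l) = set0) ->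
    exists s, Sig [set ts k | k in `I_n.+1] s /\
      \big[Order.min/+oo]_(k < n.+1) snor (ts k) - 1%:E <= snor s.

Definition cutting_property (K : set screature)
    (Sb : screature -> set (set screature)) :=
  forall t (z : set nat), K t -> 1%:E < snor t -> z !=set0 -> z `<` sdom t ->
    exists s0 s1, [/\ K s0, K s1, sdom s0 = z, sdom s1 = sdom t `\` z &
      [/\ snor t - 1%:E <= snor s0, snor t - 1%:E <= snor s1 &
          Sb t [set s0; s1]]].

Record cond := Cond { cw : pval; ct : nat -> screature }.

Definition is_cond (K : set screature) (p : cond) : Prop :=
  [/\ finite_set (pdom (cw p)), (forall i, K (ct p i)),
      (forall i j, i <> j -> sdom (ct p i) `&` sdom (ct p j) = set0),
      (forall i, pdom (cw p) `&` sdom (ct p i) = set0) &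
      [/\ (forall n, pdom (cw p) n \/ exists i, sdom (ct p i) n),
          (forall i, snor (ct p i) <> +oo) &
          (fun i => snor (ct p i)) @ \oo --> +oo]].

Definition decide_step (p q : cond) : Prop :=
  exists A : set nat, finite_set A /\
  [/\ (forall i, pdom (cw p) i -> cw q i = cw p i),
      pdom (cw q) = pdom (cw p) `|` \bigcup_(i in A) sdom (ct p i),
      (forall i, A i -> ssval (ct p i) (restr (sdom (ct p i)) (cw q))) &
      exists e : nat -> nat, [/\ {homo e : m n / (m < n)%N},
                                range e = ~` A & ct q = ct p \o e]].

Definition sigma_step (Sig : set screature -> set screature) (p q : cond) :=
  cw q = cw p /\ exists A : nat -> set nat,
    [/\ (forall i, finite_set (A i)),
        (forall i j, i <> j -> A i `&` A j = set0) &
        (forall i, Sig (ct p @` A i) (ct q i))].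

Definition sigmabot_step (Sb : screature -> set (set screature)) (p q : cond) :=
  cw q = cw p /\ exists A : nat -> set nat,
    [/\ (forall i, finite_set (A i) /\ A i !=set0),
        (forall i j, i <> j -> A i `&` A j = set0) &
        (forall i, Sb (ct p i) (ct q @` A i))].

Definition one_op (K : set screature) (Sig : set screature -> set screature)
    (Sb : screature -> set (set screature)) (p q : cond) : Prop :=
  [/\ is_cond K p, is_cond K q &
      (decide_step p q \/ sigma_step Sig p q \/ sigmabot_step Sb p q)].

(* p <= q (q stronger): q arises from p by finitely many operations,
   all intermediate results being conditions *)
Definition Qle (K : set screature) (Sig : set screature -> set screature)
    (Sb : screature -> set (set screature)) : cond -> cond -> Prop :=
  clos_refl_trans cond (one_op K Sig Sb).

End Creatures.

Definition sigma_star_linked (T : Type) (Q : set T) (le : T -> T -> Prop) :=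
  forall n : nat, exists A : nat -> set T,
    [/\ (forall i, A i `<=` Q), \bigcup_i A i = Q,
        (forall i j, i <> j -> A i `&` A j = set0) &
        (forall i (q : nat -> T), (forall k, (k <= n)%N -> A i (q k)) ->
           exists r, Q r /\ forall k, (k <= n)%N -> le (q k) r)].

(* Main.v *)
From Pilot Require Import Defs.
From HB Require Import structures.
From mathcomp Require Import all_boot all_order all_algebra.
From mathcomp Require Import all_classical all_reals all_analysis.
From Stdlib Require Import Relations.Relation_Operators.
Import Order.TTheory GRing.Theory Num.Theory.
Set Implicit Arguments.
Unset Strict Implicit.
Unset Printing Implicit Defensive.
Import Pilot.Defs.
From mathcomp Require Import zify lra.
Local Open Scope classical_set_scope.
Local Open Scope ereal_scope.

Definition dflt (H : nat -> countType) (hH : forall i, exists x y : H i, x <> y) i : H i :=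
  proj1_sig (cid (hH i)).

Definition vext (H : nat -> countType) (hH : forall i, exists x y : H i, x <> y)
  (x y : pval H) (B : set nat) : pval H := fun i =>
  match x i with Some a => Some a | None =>
  match y i with Some b => Some b | None =>
  if `[< B i >] then Some (dflt hH i) else None end end.

Lemma pvalE (H : nat -> countType) (v w : pval H) : (forall i, v i = w i) -> v = w.
Proof. move=> e; exact: functional_extensionality_dep. Qed.

Lemma pdom_vext H hH (x y : pval H) B :
  pdom x `<=` B -> pdom y `<=` B -> pdom (vext hH x y B) = B.
Proof.
move=> hx hy; apply/seteqP; split=> i; rewrite /pdom /vext /=.
- case ex: (x i) => [a|]; first by move=> _; apply: hx; rewrite /pdom /= ex.
  case ey: (y i) => [b|]; first by move=> _; apply: hy; rewrite /pdom /= ey.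
  by case: asboolP.
- move=> Bi; case: (x i) => // ; case: (y i) => //; by case: asboolP.
Qed.

Lemma restr_vext_l H hH (x y : pval H) B A :
  pdom x = A -> restr A (vext hH x y B) = x.
Proof.
move=> dx; apply: pvalE => i; rewrite /restr /vext.
case: asboolP => Ai.
  have : pdom x i by rewrite dx.
  by rewrite /pdom /=; case: (x i).
have : ~ pdom x i by rewrite dx.
by rewrite /pdom /=; case: (x i) => // a; case; discriminate.
Qed.

Lemma restr_vext_r H hH (x y : pval H) B A :
  pdom y = A -> pdom x `&` A = set0 -> restr A (vext hH x y B) = y.
Proof.
move=> dy dxy; apply: pvalE => i; rewrite /restr /vext.
case: asboolP => Ai.
  have : pdom y i by rewrite dy.
  case ex: (x i) => [a|].
    have : (pdom x `&` A) i by split => //; rewrite /pdom /= ex.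
    by rewrite dxy.
  by rewrite /pdom /=; case: (y i).
have : ~ pdom y i by rewrite dy.
by rewrite /pdom /=; case: (y i) => // a; case; discriminate.
Qed.

Lemma pdom_restr H A (v : pval H) : pdom (restr A v) = A `&` pdom v.
Proof.
apply/seteqP; split=> i; rewrite /pdom /restr /=; case: asboolP => Ai.
- by move=> h; split.
- by [].
- by case.
- by case.
Qed.

Lemma restr_id H A (v : pval H) : pdom v = A -> restr A v = v.
Proof.
move=> dv; apply: pvalE => i; rewrite /restr; case: asboolP => // Ai.
have : ~ pdom v i by rewrite dv.
by rewrite /pdom /=; case: (v i) => // a; case; discriminate.
Qed.

Lemma nor_full R H D (t : screature R H D) :
  is_semi_creature t -> snor t = +oo -> ssval t = prodH (sdom t).
Proof. by case=> _ _ _ _ [_ h]; apply: (proj2 h). Qed.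

Lemma full_nor R H D (t : screature R H D) :
  is_semi_creature t -> prodH (sdom t) `<=` ssval t -> snor t = +oo.
Proof.
case=> _ _ _ sub [_ h] hs; apply: (proj1 h); apply/seteqP; split => //.
Qed.

Lemma sig_fin R H D (K : set (screature R H D)) Sig
  (hH : forall i, exists x y : H i, x <> y) :
  (forall t, K t -> is_semi_creature t) -> semi_composition K Sig ->
  forall S t m, finite_set S -> S `<=` K -> Sig S t -> S m ->
  snor m <> +oo -> snor t <> +oo.
Proof.
move=> hK [h1 _ _ _ h5] S t m fS SK St Sm nm nt.
have Kt : K t by exact: (h1 S fS SK).
have [dt hres _] := h5 S t fS SK St.
apply: nm; apply: full_nor; first exact: hK (SK _ Sm).
move=> x dx.
have sub : sdom m `<=` sdom t by rewrite dt => i mi; exists m.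
have tfull := nor_full (hK _ Kt) nt.
set v := vext hH x (fun _ => None) (sdom t).
have pv : pdom v = sdom t.
  by apply: pdom_vext; [rewrite dx | move=> i; rewrite /pdom /=].
have : ssval t v by rewrite tfull.
move=> /(hres _ m) /(_ Sm).
by rewrite restr_vext_l.
Qed.

Lemma cut_fin R H D (K : set (screature R H D)) Sig Sb
  (hH : forall i, exists x y : H i, x <> y) :
  (forall t, K t -> is_semi_creature t) -> semi_composition K Sig ->
  semi_decomposition K Sb ->
  forall S C m s0 s1, finite_set S -> S `<=` K -> Sig S C -> S m ->
  K s0 -> K s1 -> Sb C [set s0; s1] ->
  sdom s0 `<=` sdom C -> sdom s1 `<=` sdom C -> sdom m `<=` sdom C ->
  sdom m `&` sdom s0 = set0 ->
  snor m <> +oo -> snor s1 <> +oo.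
Proof.
move=> hK [h1 _ _ _ h5] [_ _ _ hb] S C m s0 s1 fS SK SC Sm Ks0 Ks1 Sb01 sub0 sub1 subm dm0 nm ns1.
have KC : K C by exact: (h1 S fS SK).
have [dC hres _] := h5 S C fS SK SC.
have s1full := nor_full (hK _ Ks1) ns1.
have [_ _ [v0 v0s] sv0 _] := hK _ Ks0.
have pv0 : pdom v0 = sdom s0 by exact: sv0.
apply: nm; apply: full_nor; first exact: hK (SK _ Sm).
move=> x dx.
set v := vext hH v0 x (sdom C).
have pv : pdom v = sdom C.
  by apply: pdom_vext; [rewrite pv0 | rewrite dx].
have disj : pdom v0 `&` sdom m = set0 by rewrite pv0 setIC.
have vC : ssval C v.
  have [_ hc] := hb C _ KC Sb01; apply: hc; first by rewrite /prodH /=.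
  move=> s [->|->].
  - by rewrite restr_vext_l.
  - rewrite s1full /prodH /= pdom_restr pv; apply/seteqP; split => i; first by case.
    by move=> h; split => //; apply: sub1.
have := hres v m vC Sm.
by rewrite (restr_vext_r _ _ dx disj).
Qed.

Local Open Scope nat_scope.
Lemma finite_ub (A : set nat) : finite_set A -> exists B, forall x, A x -> (x < B)%N.
Proof.
move=> /finite_seqP [s ->]; exists (foldr maxn 0 s).+1 => x /=.
elim: s => //= y s IH; rewrite inE => /orP [/eqP ->|/IH h].
  by rewrite ltnS leq_maxl.
by apply: (leq_trans h); rewrite ltnS leq_maxr.
Qed.

Lemma ub_finite (A : set nat) B : (forall x, A x -> (x < B)%N) -> finite_set A.
Proof. by move=> h; apply: (sub_finite_set _ (finite_II B)) => x /h. Qed.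

Lemma unif (P : nat -> nat -> Prop) n :
  (forall k I J, (I <= J)%N -> P k I -> P k J) ->
  (forall k, (k <= n)%N -> exists I, P k I) -> exists I, forall k, (k <= n)%N -> P k I.
Proof.
move=> mono; elim: n => [|n IH] h.
  have [I hI] := h 0%N (leqnn 0); exists I => k; rewrite leqn0 => /eqP ->; exact: hI.
have [I hI] := IH (fun k hk => h k (leqW hk)).
have [J hJ] := h n.+1 (leqnn _).
exists (maxn I J) => k; rewrite leq_eqVlt => /orP [/eqP ->|hk].
  by apply: (mono _ J) => //; rewrite leq_maxr.
by apply: (mono _ I); [rewrite leq_maxl| apply: hI].
Qed.

Lemma img_interval (T : Type) (f : nat -> T) a l :
  f @` [set i | (a <= i < a + l)%N] = [set f (a + i)%N | i in `I_l].
Proof.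
apply/seteqP; split => x [i hi <-].
  exists (i - a)%N; first by rewrite /= ltn_subLR //; case/andP: hi.
  by rewrite subnKC //; case/andP: hi.
by exists (a + i)%N => //=; rewrite leq_addr ltn_add2l.
Qed.

Lemma find_interval (E : nat -> nat) x :
  E 0%N = 0%N -> (forall m, (E m < E m.+1)%N) ->
  exists m, (E m <= x < E m.+1)%N.
Proof.
move=> E0 Einc.
have Ege : forall m, (m <= E m)%N.
  elim=> [|m IH]; first by [].
  exact: leq_ltn_trans IH (Einc m).
have ex : exists m, (x < E m)%N by exists x.+1; exact: Ege.
case: (ex_minnP ex) => m hm hmin.
case: m hm hmin => [|m] hm hmin; first by rewrite E0 in hm.
exists m; rewrite hm andbT leqNgt; apply/negP => /hmin; by rewrite ltnn.
Qed.

Lemma E_mono (E : nat -> nat) : (forall m, (E m < E m.+1)%N) ->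
  forall m m', (m < m')%N -> (E m.+1 <= E m')%N.
Proof.
move=> Einc m m' hmm'; elim: m' hmm' => // m' IH.
rewrite ltnS leq_eqVlt => /orP [/eqP ->|h] //.
exact: leq_trans (IH h) (ltnW (Einc _)).
Qed.

Local Open Scope ereal_scope.
Lemma cvg_lb (R : realType) (f : nat -> \bar R) :
  (forall Y : R, exists J, forall j, (J <= j)%N -> Y%:E <= f j) -> f @ \oo --> +oo.
Proof.
move=> h; apply/cvgeyPge => Y; have [J hJ] := h Y.
exists J => // j /= hj; exact: hJ.
Qed.

Lemma lb_cvg (R : realType) (f : nat -> \bar R) :
  f @ \oo --> +oo -> forall Y : R, exists J, forall j, (J <= j)%N -> Y%:E <= f j.
Proof.
move=> /cvgeyPge h Y; have [J _ hJ] := h Y.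
exists J => j hj; exact: hJ.
Qed.

Lemma lb_sub1 (R : realType) (x y : \bar R) (Z : R) :
  x - 1%:E <= y -> Z%:E <= x -> (Z - 1)%:E <= y.
Proof.
move=> h1 h2; apply: le_trans h1.
by rewrite EFinB; apply: leeB => //.
Qed.

Lemma lb_bigmin (R : realType) m (f : 'I_m -> \bar R) (Z : R) :
  (forall i, Z%:E <= f i) -> Z%:E <= \big[Order.min/+oo]_(i < m) f i.
Proof. by move=> h; apply/bigmin_geP; split => //; rewrite leey. Qed.


Section Main.
Variables (R : realType) (H : nat -> countType) (D : Type).
Variables (K : set (screature R H D))
  (Sig : set (screature R H D) -> set (screature R H D))
  (Sb : screature R H D -> set (set (screature R H D))).
Hypothesis hH : forall i, exists x y : H i, x <> y.
Hypothesis hK : forall t, K t -> is_semi_creature t.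
Hypothesis hSig : semi_composition K Sig.
Hypothesis hSb : semi_decomposition K Sb.
Hypothesis hlink : linked K Sig.
Hypothesis hglue : semi_gluing K Sig.
Hypothesis hcut : cutting_property K Sb.

Local Notation scr := (screature R H D).

Definition glue_hyp (m : nat) (ts : nat -> scr) :=
  (forall k, (k <= m)%N -> K (ts k)) /\
  (forall k l, (k <= m)%N -> (l <= m)%N -> k <> l ->
       sdom (ts k) `&` sdom (ts l) = set0).
Definition glue_con m (ts : nat -> scr) s :=
  Sig [set ts k | k in `I_m.+1] s /\
  \big[Order.min/+oo]_(k < m.+1) snor (ts k) - 1%:E <= snor s.

Lemma glue_ex : forall mts : nat * (nat -> scr), exists s,
  glue_hyp mts.1 mts.2 -> glue_con mts.1 mts.2 s.
Proof.
case=> m ts /=; case: (pselect (glue_hyp m ts)) => [[h1 h2]|nh].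
  have [s hs] := hglue h1 h2; by exists s.
by exists (ts 0%N).
Qed.
Definition glue m ts := projT1 (choice glue_ex) (m, ts).
Lemma glueP m ts : glue_hyp m ts -> glue_con m ts (glue m ts).
Proof. exact: (projT2 (choice glue_ex) (m, ts)). Qed.

Definition cut_hyp (t : scr) (z : set nat) :=
  K t /\ 1%:E < snor t /\ z !=set0 /\ z `<` sdom t.
Definition cut_con (t : scr) (z : set nat) (s : scr * scr) :=
  [/\ K s.1, K s.2, sdom s.1 = z, sdom s.2 = sdom t `\` z &
      [/\ snor t - 1%:E <= snor s.1, snor t - 1%:E <= snor s.2 &
          Sb t [set s.1; s.2]]].
Lemma cut_ex : forall tz : scr * set nat, exists s,
  cut_hyp tz.1 tz.2 -> cut_con tz.1 tz.2 s.
Proof.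
case=> t z /=; case: (pselect (cut_hyp t z)) => [[h1 [h2 [h3 h4]]]|nh].
  have [s0 [s1 hs]] := hcut h1 h2 h3 h4; by exists (s0, s1).
by exists (t, t).
Qed.
Definition cut t z := projT1 (choice cut_ex) (t, z).
Lemma cutP t z : cut_hyp t z -> cut_con t z (cut t z).
Proof. exact: (projT2 (choice cut_ex) (t, z)). Qed.

Definition link_hyp (t0 t1 : scr) :=
  [/\ K t0, K t1, 1%:E < snor t0, 1%:E < snor t1 & sdom t0 = sdom t1].
Definition link_con (t0 t1 s : scr) :=
  [/\ Sig [set t0] s, Sig [set t1] s &
      Order.min (snor t0) (snor t1) - 1%:E <= snor s].
Lemma link_ex : forall tt : scr * scr, exists s,
  link_hyp tt.1 tt.2 -> link_con tt.1 tt.2 s.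
Proof.
case=> t0 t1 /=; case: (pselect (link_hyp t0 t1)) => [[h1 h2 h3 h4 h5]|nh].
  have [s hs] := hlink h1 h2 h3 h4 h5; by exists s.
by exists t0.
Qed.
Definition link t0 t1 := projT1 (choice link_ex) (t0, t1).
Lemma linkP t0 t1 : link_hyp t0 t1 -> link_con t0 t1 (link t0 t1).
Proof. exact: (projT2 (choice link_ex) (t0, t1)). Qed.

Lemma sigK S t : finite_set S -> S `<=` K -> Sig S t -> K t.
Proof. by case: hSig => h1 _ _ _ _ fS SK; apply: h1. Qed.

Lemma sig_dom S t : finite_set S -> S `<=` K -> Sig S t ->
  sdom t = \bigcup_(s in S) sdom s.
Proof. by case: hSig => _ _ _ _ h5 fS SK St; case: (h5 S t fS SK St). Qed.

Lemma sig1_dom s t : K s -> Sig [set s] t -> sdom t = sdom s.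
Proof.
move=> Ks St; rewrite (sig_dom (finite_set1 s) _ St); last by move=> x ->.
by rewrite bigcup_set1.
Qed.

Lemma trans1 S s t : finite_set S -> S `<=` K -> Sig S s -> Sig [set s] t -> Sig S t.
Proof.
move=> fS SK Ss st; case: hSig => _ ha _ _ _.
have Ks := sigK fS SK Ss.
have := ha [set s] (fun _ => S) (finite_set1 s) (fun x (e : x = s) => ltac:(by rewrite e)).
rewrite bigcup_set1; apply => // x ->; by split.
Qed.

Lemma sig1_refl t : K t -> Sig [set t] t.
Proof. by case: hSig => _ _ hb _ _; apply: hb. Qed.

Lemma sig1_fin s t : K s -> Sig [set s] t -> snor s <> +oo -> snor t <> +oo.
Proof.
move=> Ks st; apply: (sig_fin hH hK hSig (finite_set1 s) _ st) => //.
by move=> x ->.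
Qed.

End Main.

Section Decide.
Variables (R : realType) (H : nat -> countType) (D : Type).
Variables (K : set (screature R H D))
  (Sig : set (screature R H D) -> set (screature R H D))
  (Sb : screature R H D -> set (set (screature R H D))).
Hypothesis hK : forall t, K t -> is_semi_creature t.

Lemma owner_eq (t : nat -> screature R H D) i j :
  (forall i j, i <> j -> sdom (t i) `&` sdom (t j) = set0) ->
  sdom (t i) j -> xget 0%N [set i | sdom (t i) j] = i.
Proof.
move=> disj tij.
have hx := @xgetPex _ 0%N [set i | sdom (t i) j] (ex_intro _ i tij).
apply: contrapT => ne.
have := disj _ _ ne; move/seteqP => [/(_ j) h _]; exact: h.
Qed.

Lemma decide_exists (M : R) p : is_cond K p ->
  exists p', Qle K Sig Sb p p' /\ is_cond K p' /\
    (forall i, M%:E < snor (ct p' i)).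
Proof.
move=> cp; case: (cp) => fw Kt disj wdisj [cover nfin lim].
have [N hN] := lb_cvg lim (M + 1).
have hv : forall i, exists v : pval H, ssval (ct p i) v.
  by move=> i; have [_ _ [v hv] _ _] := hK (Kt i); exists v.
have [v vP] := choice hv.
have pv : forall i, pdom (v i) = sdom (ct p i).
  by move=> i; have [_ _ _ sub _] := hK (Kt i); exact: sub _ (vP i).
pose owner j := xget 0%N [set i | sdom (ct p i) j].
have own : forall i j, sdom (ct p i) j -> owner j = i.
  by move=> i j; apply: owner_eq.
pose u : pval H := fun j => match cw p j with Some a => Some a | None =>
   if (owner j < N)%N then v (owner j) j else None end.
have wnone : forall i j, sdom (ct p i) j -> cw p j = None.
  move=> i j tij; case e: (cw p j) => [a|] //.
  have : (pdom (cw p) `&` sdom (ct p i)) j by split => //; rewrite /pdom /= e.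
  by rewrite wdisj.
have vdom : forall i j, (v i j <> None) <-> sdom (ct p i) j.
  by move=> i j; rewrite -pv.
have pdu : pdom u = pdom (cw p) `|` \bigcup_(i in [set i | (i < N)%N]) sdom (ct p i).
  apply/seteqP; split => j; rewrite /pdom /u /=.
    case e: (cw p j) => [a|]; first by left.
    case: ifP => // hj hvj; right; exists (owner j) => //.
    exact/vdom.
  case.
    by case: (cw p j).
  move=> [i /= iN tij]; rewrite (wnone _ _ tij) (own _ _ tij) iN.
  exact/vdom.
have restru : forall i, (i < N)%N -> restr (sdom (ct p i)) u = v i.
  move=> i iN; apply: pvalE => j; rewrite /restr; case: asboolP => tij.
    by rewrite /u (wnone _ _ tij) (own _ _ tij) iN.
  by case e: (v i j) => [a|] //; exfalso; apply: tij; apply/vdom; rewrite e.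
pose p' := Cond u (fun m => ct p (m + N)%N).
have cp' : is_cond K p'.
  split => /=.
  - rewrite pdu finite_setU; split => //; apply: bigcup_finite.
      by apply: (@ub_finite _ N).
    move=> i _; by have [] := hK (Kt i).
  - by [].
  - move=> i j ne; apply: disj => e; apply: ne; exact: (addIn e).
  - move=> m; apply/seteqP; split => // j [uj tj]; apply: uj => /=.
    rewrite /u (wnone _ _ tj) (own _ _ tj); case: ifP => //.
    by rewrite ltnNge leq_addl.
  - split.
    + move=> j; case: (cover j) => [hj|[i tij]].
        by left; rewrite pdu; left.
      case: (ltnP i N) => iN.
        by left; rewrite pdu; right; exists i.
      by right; exists (i - N)%N; rewrite subnK.
    + by move=> m; apply: nfin.
    + by rewrite (cvg_shiftn N (fun i => snor (ct p i))).
exists p'; split; last split => //.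
  apply: rt_step; split => //; left.
  exists [set i | (i < N)%N]; split; first exact: (@ub_finite _ N).
  split => //=.
  - by move=> j; rewrite /pdom /u /=; case: (cw p j).
  - by move=> i iN; rewrite restru.
  - exists (fun m => m + N)%N; split => //.
      by move=> a b ab; rewrite ltn_add2r.
    apply/seteqP; split => i.
      by move=> [m _ <-] /=; rewrite ltnNge leq_addl.
    by move=> /= /negP; rewrite -leqNgt => iN; exists (i - N)%N => //; rewrite subnK.
move=> i /=; apply: lt_le_trans (hN _ (leq_addl _ _)).
by rewrite lte_fin ltrDl.
Qed.
End Decide.

Definition bnd_of (H : nat -> countType) (u : pval H) : nat :=
  xget 0%N [set m | forall i, (m <= i)%N -> u i = None].
Definition enc (H : nat -> countType) (u : pval H) : nat :=
  pickle (bnd_of u, [seq pickle (u i) | i <- iota 0 (bnd_of u)]).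

Lemma bnd_ofP H (u : pval H) : finite_set (pdom u) ->
  forall i, (bnd_of u <= i)%N -> u i = None.
Proof.
move=> /finite_ub [B hB].
have : exists m, [set m | forall i, (m <= i)%N -> u i = None] m.
  exists B => i Bi /=; case e: (u i) => [a|] //.
  have : (i < B)%N by apply: hB; rewrite /pdom /= e.
  by rewrite ltnNge Bi.
by move/(xgetPex 0%N).
Qed.

Lemma enc_inj H (u u' : pval H) : finite_set (pdom u) -> finite_set (pdom u') ->
  enc u = enc u' -> u = u'.
Proof.
move=> fu fu' /(pcan_inj pickleK_inv) [em el].
apply: pvalE => i; case: (ltnP i (bnd_of u)) => hi.
  have := congr1 (fun s => nth 0%N s i) el.
  rewrite (nth_map 0%N) ?size_iota // (nth_map 0%N) ?size_iota -?em //.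
  rewrite !nth_iota -?em // !add0n; exact: (pcan_inj pickleK_inv).
by rewrite bnd_ofP // bnd_ofP // -em.
Qed.

Fixpoint chain (S : Type) (lnk : S -> S -> S) (g : nat -> S) (k : nat) : S :=
  match k with 0%N => g 0%N | k'.+1 => lnk (chain lnk g k') (g k'.+1) end.

Section Chain.
Variables (R : realType) (H : nat -> countType) (D : Type).
Variables (K : set (screature R H D))
  (Sig : set (screature R H D) -> set (screature R H D)).
Hypothesis hSig : semi_composition K Sig.
Hypothesis hlink : linked K Sig.
Local Notation scr := (screature R H D).

Lemma chainP (n : nat) (g : nat -> scr) (Dm : set nat) (Z : R) :
  (forall k, (k <= n)%N -> [/\ K (g k), sdom (g k) = Dm & Z%:E <= snor (g k)]) ->
  (1 < Z - n%:R)%R ->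
  forall k, (k <= n)%N ->
    [/\ K (chain (link hlink) g k), sdom (chain (link hlink) g k) = Dm,
        (Z - k%:R)%:E <= snor (chain (link hlink) g k) &
        forall i, (i <= k)%N -> Sig [set g i] (chain (link hlink) g k)].
Proof.
move=> hg hZ; elim=> [|k IH] hk /=.
  have [K0 d0 z0] := hg 0%N hk; split.
  - exact: K0.
  - exact: d0.
  - by rewrite subr0.
  - by move=> i; rewrite leqn0 => /eqP ->; exact: (sig1_refl hSig K0).
have [Kc dc zc sc] := IH (ltnW hk).
have [K1 d1 z1] := hg k.+1 hk.
have lt1 : forall y : \bar R, (Z - k.+1%:R)%:E <= y -> 1%:E < y.
  move=> y hy; apply: lt_le_trans hy; rewrite lte_fin.
  apply: lt_le_trans hZ _; rewrite lerD2l lerN2 ler_nat; exact: hk.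
have hyp : link_hyp K (chain (link hlink) g k) (g k.+1).
  split => //; last by rewrite dc d1.
  - apply: lt1; apply: le_trans zc; rewrite lee_fin lerD2l lerN2 ler_nat; exact: leqnSn.
  - apply: lt1; apply: le_trans z1; rewrite lee_fin lerBlDr lerDl; exact: ler0n.
have [s0 s1 sn] := linkP hlink hyp.
have Ks : K (link hlink (chain (link hlink) g k) (g k.+1)).
  apply: (sigK hSig (finite_set1 _) _ s1); by move=> x ->.
split => //.
- by rewrite (sig1_dom hSig K1 s1).
- have -> : (Z - k.+1%:R = Z - k%:R - 1)%R by rewrite -natr1 opprD addrA.
  apply: (lb_sub1 sn); rewrite le_min zc /=; apply: le_trans z1.
  by rewrite lee_fin lerBlDr lerDl; exact: ler0n.
- move=> i; rewrite leq_eqVlt => /orP []; first by move=> /eqP ->; exact: s1.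
  move=> hi.
  apply: (trans1 hSig (finite_set1 _) _ (sc i hi) s0).
  by move=> x ->; have [] := hg i (ltnW (leq_trans hi hk)).
Qed.
End Chain.

Lemma hM1 (R : realType) (M : R) (n : nat) : (n%:R + 4 < M)%R -> (1 < M - 1)%R.
Proof. move=> h; have := ler0n R n; lra. Qed.

Lemma hM2 (R : realType) (M : R) (n : nat) : (n%:R + 4 < M)%R -> (1 < M - 1 - 1)%R.
Proof. move=> h; have := ler0n R n; lra. Qed.

Lemma hM3 (R : realType) (M Z : R) (n : nat) : (n%:R + 4 < M)%R -> (M <= Z)%R ->
  (1 < Z - 3 - n%:R)%R.
Proof. move=> h1 h2; lra. Qed.

Lemma three (R : realType) (Z : R) : (Z - 3 = Z - 1 - 1 - 1)%R.
Proof. lra. Qed.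

Lemma lbY (R : realType) (Y Z b : R) : (Y + 3 + b <= Z)%R -> (Y <= Z - 3 - b)%R.
Proof. move=> h; lra. Qed.

Lemma le3 (R : realType) (Z : R) : (Z - 1 - 1 - 1 <= Z - 1 - 1)%R.
Proof. lra. Qed.

Unset Implicit Arguments.
Section Comb.
Variables (R : realType) (H : nat -> countType) (D : Type).
Variables (K : set (screature R H D))
  (Sig : set (screature R H D) -> set (screature R H D))
  (Sb : screature R H D -> set (set (screature R H D))).
Hypothesis hH : forall i, exists x y : H i, x <> y.
Hypothesis hK : forall t, K t -> is_semi_creature t.
Hypothesis hSig : semi_composition K Sig.
Hypothesis hSb : semi_decomposition K Sb.
Hypothesis hlink : linked K Sig.
Hypothesis hglue : semi_gluing K Sig.
Hypothesis hcut : cutting_property K Sb.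
Variable n : nat.
Variable u : pval H.
Variable p : nat -> cond R H D.
Hypothesis hp : forall k, (k <= n)%N -> is_cond K (p k).
Hypothesis hu : forall k, (k <= n)%N -> cw (p k) = u.
Variable M : R.
Hypothesis hM : (n%:R + 4 < M)%R.
Hypothesis hnor : forall k i, (k <= n)%N -> M%:E < snor (ct (p k) i).

Local Notation scr := (screature R H D).
Local Notation t k i := (ct (p k) i).

Lemma tK k i : (k <= n)%N -> K (t k i).
Proof. by move=> hk; have [_ h _ _ _] := hp k hk. Qed.

Lemma tdisj k i i' x : (k <= n)%N -> sdom (t k i) x -> sdom (t k i') x -> i = i'.
Proof.
move=> hk h1 h2; have [_ _ disj _ _] := hp k hk; apply: contrapT => ne.
by have := disj _ _ ne; move/seteqP => [/(_ x) h _]; apply: h.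
Qed.

Lemma tne k i : (k <= n)%N -> exists x, sdom (t k i) x.
Proof. by move=> hk; have [_ [x hx] _ _ _] := hK _ (tK k i hk); exists x. Qed.

Lemma tfin k i : (k <= n)%N -> finite_set (sdom (t k i)).
Proof. by move=> hk; have [] := hK _ (tK k i hk). Qed.

Lemma tnfin k i : (k <= n)%N -> snor (t k i) <> +oo.
Proof. by move=> hk; have [_ _ _ _ [_ h _]] := hp k hk. Qed.

Lemma cov k x : (k <= n)%N -> ~ pdom u x <-> exists i, sdom (t k i) x.
Proof.
move=> hk; have [_ _ _ wd [cover _ _]] := hp k hk; rewrite -(hu k hk); split.
  by move=> nu; case: (cover x).
move=> [i ti] ux; have : (pdom (cw (p k)) `&` sdom (t k i)) x by [].
by rewrite wd.
Qed.

Lemma bnd_ex a : exists E, forall k, (k <= n)%N -> forall i, (i <= a)%N ->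
  forall x, sdom (t k i) x -> (x < E)%N.
Proof.
apply: (unif (P := fun k E => forall i, (i <= a)%N -> forall x, sdom (t k i) x -> (x < E)%N)).
  move=> k I J IJ h i ia x tx; exact: leq_trans (h i ia x tx) IJ.
move=> k hk.
have : finite_set (\bigcup_(i in [set i | (i <= a)%N]) sdom (t k i)).
  apply: bigcup_finite; first by apply: (@ub_finite _ a.+1).
  move=> i _; exact: tfin k i hk.
move=> /finite_ub [B hB]; exists B => i ia x tx; apply: hB; by exists i.
Qed.

Lemma idx_ex E : exists I, forall k, (k <= n)%N -> forall i, (I <= i)%N ->
  forall x, sdom (t k i) x -> (E <= x)%N.
Proof.
apply: (unif (P := fun k I => forall i, (I <= i)%N -> forall x, sdom (t k i) x -> (E <= x)%N)).
  move=> k I J IJ h i Ji; apply: h; exact: leq_trans IJ Ji.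
move=> k hk; elim: E => [|E [I hI]]; first by exists 0%N.
case: (pselect (exists i0, sdom (t k i0) E)) => [[i0 hi0]|nE].
  exists (maxn I i0.+1) => i hi x tx.
  have Ex := hI i (leq_trans (leq_maxl _ _) hi) x tx.
  rewrite ltn_neqAle Ex andbT; apply/eqP => eEx; rewrite -eEx in tx.
  have ii := tdisj k i0 i E hk hi0 tx; move: hi; rewrite -ii geq_max ltnn andbF //.
exists I => i hi x tx; rewrite ltn_neqAle (hI i hi x tx) andbT; apply/eqP => eEx.
by apply: nE; exists i; rewrite eEx.
Qed.

Definition bndf := projT1 (choice bnd_ex).
Lemma bndfP a : forall k, (k <= n)%N -> forall i, (i <= a)%N ->
  forall x, sdom (t k i) x -> (x < bndf a)%N.
Proof. exact: (projT2 (choice bnd_ex) a). Qed.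
Definition idxf := projT1 (choice idx_ex).
Lemma idxfP E : forall k, (k <= n)%N -> forall i, (idxf E <= i)%N ->
  forall x, sdom (t k i) x -> (E <= x)%N.
Proof. exact: (projT2 (choice idx_ex) E). Qed.

Fixpoint aseq j := match j with
  | 0%N => 0%N
  | j'.+1 => (maxn (idxf (bndf (aseq j'))) (aseq j')).+1 end.
Definition e j := bndf (aseq j).

Lemma a_lt j : (aseq j < aseq j.+1)%N.
Proof. by rewrite /= ltnS leq_maxr. Qed.

Lemma a_ge j : (j <= aseq j)%N.
Proof. elim: j => // j IH; exact: leq_ltn_trans IH (a_lt j). Qed.

Lemma a_le j j' : (j <= j')%N -> (aseq j <= aseq j')%N.
Proof.
rewrite leq_eqVlt => /orP [/eqP -> //|h].
exact: leq_trans (ltnW (a_lt j)) (E_mono a_lt h).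
Qed.

Lemma P1 k j i x : (k <= n)%N -> (i <= aseq j)%N -> sdom (t k i) x -> (x < e j)%N.
Proof. by move=> hk hi; apply: bndfP. Qed.

Lemma P2 k j i x : (k <= n)%N -> (aseq j.+1 <= i.+1)%N -> sdom (t k i) x -> (e j <= x)%N.
Proof.
move=> hk hi; apply: idxfP => //; move: hi; rewrite /= ltnS geq_max; by case/andP.
Qed.

Arguments aseq : simpl never.

Lemma e_lt j : (e j < e j.+1)%N.
Proof.
have [x hx] := tne 0%N (aseq j.+1).-1 (leq0n n).
have h1 := P1 0%N j.+1 _ x (leq0n n) (leq_pred _) hx.
have h2 := P2 0%N j _ x (leq0n n) (eq_leq (esym (prednK (leq_ltn_trans (leq0n _) (a_lt j))))) hx.
exact: leq_ltn_trans h2 h1.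
Qed.

Lemma e0_pos : (0 < e 0)%N.
Proof.
have [x hx] := tne 0%N 0%N (leq0n n).
exact: leq_ltn_trans (leq0n x) (P1 0%N 0%N 0%N x (leq0n n) (leq0n _) hx).
Qed.

Definition len j := ((aseq j.+1 - aseq j).-1)%N.
Lemma a_len j : (aseq j + (len j).+1 = aseq j.+1)%N.
Proof. have := a_lt j; rewrite /len; lia. Qed.

Lemma a_len' j : (aseq j + len j = (aseq j.+1).-1)%N.
Proof. have := a_lt j; rewrite /len; lia. Qed.

Definition ts k j (i : nat) := t k (aseq j + i)%N.
Definition Sset k j := [set ts k j i | i in `I_(len j).+1].
Definition C k j := glue hglue (len j) (ts k j).

Lemma Sset_fin k j : finite_set (Sset k j).
Proof. exact: finite_image (finite_II _). Qed.
Lemma Sset_K k j : (k <= n)%N -> Sset k j `<=` K.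
Proof. by move=> hk s [i _ <-]; exact: tK k _ hk. Qed.

Lemma C_hyp k j : (k <= n)%N -> glue_hyp K (len j) (ts k j).
Proof.
move=> hk; split; first by move=> i _; apply: tK k _ hk.
move=> i i' _ _ ne; apply/seteqP; split => // x [h1 h2]; apply: ne.
have := tdisj k _ _ x hk h1 h2; exact: addnI.
Qed.

Lemma C_con k j : (k <= n)%N -> glue_con Sig (len j) (ts k j) (C k j).
Proof. by move=> hk; apply: glueP; apply: C_hyp k j hk. Qed.

Lemma C_sig k j : (k <= n)%N -> Sig (Sset k j) (C k j).
Proof. by move=> hk; case: (C_con k j hk). Qed.

Lemma C_K k j : (k <= n)%N -> K (C k j).
Proof. by move=> hk; apply: (sigK hSig (Sset_fin k j) (Sset_K k j hk) (C_sig k j hk)). Qed.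

Lemma C_dom k j x : (k <= n)%N ->
  sdom (C k j) x <-> exists2 i, (aseq j <= i < aseq j.+1)%N & sdom (t k i) x.
Proof.
move=> hk; rewrite (sig_dom hSig (Sset_fin k j) (Sset_K k j hk) (C_sig k j hk)); split.
- move=> [s [i /= hi <-] hx]; exists (aseq j + i)%N => //.
  by rewrite leq_addr /= -(a_len j) ltn_add2l.
- move=> [i /andP [h1 h2] hx]; exists (t k i) => //; exists (i - aseq j)%N.
    have h3 : (i - aseq j < (len j).+1)%N by rewrite ltn_subLR // a_len.
    exact: h3.
  by rewrite /ts subnKC.
Qed.

Lemma C_lb k j (Z : R) : (k <= n)%N ->
  (forall i, (aseq j <= i)%N -> Z%:E <= snor (t k i)) -> (Z - 1)%:E <= snor (C k j).
Proof.
move=> hk hZ; have [_ h] := C_con k j hk; apply: (lb_sub1 h).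
apply: lb_bigmin => i; apply: hZ; exact: leq_addr.
Qed.

Lemma Mlev k i : (k <= n)%N -> M%:E <= snor (t k i).
Proof. by move=> hk; apply: ltW; apply: hnor k i hk. Qed.

Lemma C_gt1 k j : (k <= n)%N -> 1%:E < snor (C k j).
Proof.
move=> hk; have := C_lb k j M hk (fun i _ => Mlev k i hk); apply: lt_le_trans.
rewrite lte_fin; exact: hM1 hM.
Qed.

Lemma C_fin k j : (k <= n)%N -> snor (C k j) <> +oo.
Proof.
move=> hk; apply: (sig_fin hH hK hSig (Sset_fin k j) (Sset_K k j hk) (C_sig k j hk) (m := ts k j 0%N)).
  by exists 0%N.
exact: tnfin k _ hk.
Qed.

Lemma C_disj k j j' x : (k <= n)%N -> j <> j' -> sdom (C k j) x -> sdom (C k j') x -> False.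
Proof.
move=> hk ne /(C_dom k j x hk) [i /andP [h1 h2] hi] /(C_dom k j' x hk) [i' /andP [h1' h2'] hi'].
have ii := tdisj k i i' x hk hi hi'; subst i'.
case: (ltngtP j j') => hjj //.
- have := a_le _ _ (hjj : (j.+1 <= j')%N); lia.
- have := a_le _ _ (hjj : (j'.+1 <= j)%N); lia.
Qed.


Definition zc j := [set x | (x < e j)%N].
Definition LR k j := cut hcut (C k j) (sdom (C k j) `&` zc j).
Definition Lp k j := (LR k j).1.
Definition Rp k j := (LR k j).2.

Lemma chunk_first k j x : (k <= n)%N -> sdom (t k (aseq j)) x -> sdom (C k j) x /\ (x < e j)%N.
Proof.
move=> hk hx; split; last exact: (P1 k j _ x hk (leqnn _) hx).
by apply/(C_dom k j x hk); exists (aseq j) => //; rewrite leqnn a_lt.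
Qed.

Lemma chunk_last k j x : (k <= n)%N -> sdom (t k (aseq j.+1).-1) x ->
  sdom (C k j) x /\ (e j <= x)%N.
Proof.
move=> hk hx; have := a_lt j => alt; split.
  apply/(C_dom k j x hk); exists (aseq j.+1).-1 => //; lia.
apply: (P2 k j _ x hk _ hx); lia.
Qed.

Lemma LR_hyp k j : (k <= n)%N -> cut_hyp K (C k j) (sdom (C k j) `&` zc j).
Proof.
move=> hk; split; first exact: C_K k j hk.
split; first exact: C_gt1 k j hk.
split.
  have [x hx] := tne k (aseq j) hk; exists x; exact: chunk_first k j x hk hx.
split; first by move=> x [].
move=> sub; have [x hx] := tne k (aseq j.+1).-1 hk.
have [h1 h2] := chunk_last k j x hk hx.
have [_ hz] := sub x h1; move: hz; rewrite /zc /mkset ltnNge h2 //.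
Qed.

Lemma LR_con k j : (k <= n)%N -> cut_con K Sb (C k j) (sdom (C k j) `&` zc j) (LR k j).
Proof. by move=> hk; apply: cutP; apply: LR_hyp k j hk. Qed.

Lemma Lp_K k j : (k <= n)%N -> K (Lp k j).
Proof. by move=> hk; case: (LR_con k j hk). Qed.
Lemma Rp_K k j : (k <= n)%N -> K (Rp k j).
Proof. by move=> hk; case: (LR_con k j hk). Qed.

Lemma Lp_dom k j x : (k <= n)%N -> sdom (Lp k j) x <-> sdom (C k j) x /\ (x < e j)%N.
Proof. by move=> hk; case: (LR_con k j hk) => _ _ -> _ _. Qed.

Lemma Rp_dom k j x : (k <= n)%N -> sdom (Rp k j) x <-> sdom (C k j) x /\ (e j <= x)%N.
Proof.
move=> hk; case: (LR_con k j hk) => _ _ _ -> _; split.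
  by move=> [h1 h2]; split => //; rewrite leqNgt; apply/negP => h3; apply: h2.
by move=> [h1 h2]; split => // -[_ hz]; move: hz; rewrite /zc /mkset ltnNge h2.
Qed.

Lemma LR_sb k j : (k <= n)%N -> Sb (C k j) [set Lp k j; Rp k j].
Proof. by move=> hk; case: (LR_con k j hk) => _ _ _ _ []. Qed.

Lemma Rp_fin k j : (k <= n)%N -> snor (Rp k j) <> +oo.
Proof.
move=> hk.
apply: (cut_fin hH hK hSig hSb (Sset_fin k j) (Sset_K k j hk) (C_sig k j hk)
  (m := ts k j (len j)) (s0 := Lp k j) (s1 := Rp k j)).
- by exists (len j) => //; rewrite /mkset ltnSn.
- exact: Lp_K k j hk.
- exact: Rp_K k j hk.
- exact: LR_sb k j hk.
- by move=> x /(Lp_dom k j x hk) [].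
- by move=> x /(Rp_dom k j x hk) [].
- by rewrite /ts a_len' => x hx; have [] := chunk_last k j x hk hx.
- rewrite /ts a_len'; apply/seteqP; split => // x [hx /(Lp_dom k j x hk) [_ lt]].
  have [_ ge] := chunk_last k j x hk hx.
  by move: lt; rewrite ltnNge ge.
- exact: tnfin k _ hk.
Qed.

Lemma Lp_fin k j : (k <= n)%N -> snor (Lp k j) <> +oo.
Proof.
move=> hk.
apply: (cut_fin hH hK hSig hSb (Sset_fin k j) (Sset_K k j hk) (C_sig k j hk)
  (m := ts k j 0%N) (s0 := Rp k j) (s1 := Lp k j)).
- by exists 0%N.
- exact: Rp_K k j hk.
- exact: Lp_K k j hk.
- by rewrite setUC; exact: LR_sb k j hk.
- by move=> x /(Rp_dom k j x hk) [].
- by move=> x /(Lp_dom k j x hk) [].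
- by rewrite /ts addn0 => x hx; have [] := chunk_first k j x hk hx.
- rewrite /ts addn0; apply/seteqP; split => // x [hx /(Rp_dom k j x hk) [_ ge]].
  have [_ lt] := chunk_first k j x hk hx.
  by move: lt; rewrite ltnNge ge.
- exact: tnfin k _ hk.
Qed.

Lemma LR_lb k j (Z : R) : (k <= n)%N ->
  (forall i, (aseq j <= i)%N -> Z%:E <= snor (t k i)) ->
  (Z - 1 - 1)%:E <= snor (Lp k j) /\ (Z - 1 - 1)%:E <= snor (Rp k j).
Proof.
move=> hk hZ; have hC := C_lb k j Z hk hZ.
case: (LR_con k j hk) => _ _ _ _ [h1 h2 _]; split.
  exact: lb_sub1 h1 hC.
exact: lb_sub1 h2 hC.
Qed.


Definition Pc k i := if odd i then Rp k i./2 else Lp k i./2.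

Lemma Pc_even k j : Pc k j.*2 = Lp k j.
Proof. by rewrite /Pc odd_double doubleK. Qed.

Lemma Pc_odd k j : Pc k j.*2.+1 = Rp k j.
Proof. by rewrite /Pc /= odd_double /= uphalf_double. Qed.

Lemma Pc_K k i : (k <= n)%N -> K (Pc k i).
Proof. by move=> hk; rewrite /Pc; case: ifP => _; [apply: Rp_K k _ hk | apply: Lp_K k _ hk]. Qed.

Lemma Pc_fin k i : (k <= n)%N -> snor (Pc k i) <> +oo.
Proof. by move=> hk; rewrite /Pc; case: ifP => _; [apply: Rp_fin k _ hk | apply: Lp_fin k _ hk]. Qed.

Lemma Pc_sub k i x : (k <= n)%N -> sdom (Pc k i) x -> sdom (C k i./2) x.
Proof.
move=> hk; rewrite /Pc; case: ifP => _.
  by move/(Rp_dom k _ x hk) => [].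
by move/(Lp_dom k _ x hk) => [].
Qed.

Lemma Pc_disj k i i' x : (k <= n)%N -> i <> i' -> sdom (Pc k i) x -> sdom (Pc k i') x -> False.
Proof.
move=> hk ne h1 h2.
case: (eqVneq i./2 i'./2) => hh; last first.
  have ne' : i./2 <> i'./2 by move=> e; move: hh; rewrite e eqxx.
  exact: (C_disj k _ _ x hk ne' (Pc_sub k i x hk h1) (Pc_sub k i' x hk h2)).
have ho : odd i != odd i'.
  apply/negP => /eqP ho; apply: ne.
  by rewrite -[i]odd_double_half -[i']odd_double_half ho hh.
move: h1 h2; rewrite /Pc hh; case: (odd i) ho; case: (odd i') => // _.
- move=> /(Rp_dom k _ x hk) [_ ge] /(Lp_dom k _ x hk) [_ lt].
  by move: lt; rewrite ltnNge ge.
- move=> /(Lp_dom k _ x hk) [_ lt] /(Rp_dom k _ x hk) [_ ge].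
  by move: lt; rewrite ltnNge ge.
Qed.

Lemma Pc_lb k i (Z : R) : (k <= n)%N ->
  (forall l, (aseq i./2 <= l)%N -> Z%:E <= snor (t k l)) -> (Z - 1 - 1)%:E <= snor (Pc k i).
Proof.
move=> hk hZ; have [h1 h2] := LR_lb k i./2 Z hk hZ.
by rewrite /Pc; case: ifP.
Qed.

Definition Eb m := match m with 0%N => 0%N | m'.+1 => e m' end.

Lemma Eb_lt m : (Eb m < Eb m.+1)%N.
Proof. case: m => [|m] /=; [exact: e0_pos | exact: e_lt]. Qed.

Lemma Eb_uniq m m' x : (Eb m <= x < Eb m.+1)%N -> (Eb m' <= x < Eb m'.+1)%N -> m = m'.
Proof.
move=> /andP [h1 h2] /andP [h1' h2'].
case: (ltngtP m m') => // hm.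
- have := E_mono Eb_lt hm; lia.
- have := E_mono Eb_lt hm; lia.
Qed.

Lemma C_Eb k j x : (k <= n)%N -> sdom (C k j) x -> (Eb j <= x < Eb j.+2)%N.
Proof.
move=> hk /(C_dom k j x hk) [l /andP [h1 h2] hl]; apply/andP; split.
  case: j h1 h2 => [|j] h1 h2 //=.
  apply: (P2 k j l x hk _ hl); lia.
apply: (P1 k j.+1 l x hk _ hl); lia.
Qed.

Definition Dset m := [set x | ~ pdom u x /\ (Eb m <= x < Eb m.+1)%N].

Definition G k m := match m with
  | 0%N => Lp k 0%N
  | m'.+1 => glue hglue 1 (fun i => Pc k (m'.*2.+1 + i)%N) end.
Definition Aset m := [set i | ((m.*2).-1 <= i <= m.*2)%N].
Definition GS k m := Pc k @` Aset m.

Lemma GS_fin k m : finite_set (GS k m).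
Proof. apply: finite_image; apply: (@ub_finite _ m.*2.+1) => i /andP [_ h]; exact: h. Qed.

Lemma GS_K k m : (k <= n)%N -> GS k m `<=` K.
Proof. by move=> hk s [i _ <-]; apply: Pc_K k i hk. Qed.

Lemma GS_succ k m' : GS k m'.+1 = [set Pc k (m'.*2.+1 + i)%N | i in `I_2].
Proof.
rewrite /GS -img_interval; congr (_ @` _); apply/seteqP; split => i; rewrite /Aset /mkset; lia.
Qed.

Lemma GS_zero k : GS k 0%N = [set Lp k 0%N].
Proof.
apply/seteqP; split => s.
  by move=> [i /= /andP [_ hi] <-]; move: hi; rewrite leqn0 => /eqP ->; rewrite (Pc_even k 0%N).
by move=> ->; exists 0%N => //; rewrite (Pc_even k 0%N).
Qed.

Lemma G_hyp k m' : (k <= n)%N -> glue_hyp K 1 (fun i => Pc k (m'.*2.+1 + i)%N).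
Proof.
move=> hk; split; first by move=> i _; apply: Pc_K k _ hk.
move=> i l _ _ ne; apply/seteqP; split => // x [h1 h2].
apply: (Pc_disj k _ _ x hk _ h1 h2) => e; apply: ne; lia.
Qed.

Lemma G_sig k m : (k <= n)%N -> Sig (GS k m) (G k m).
Proof.
move=> hk; case: m => [|m'].
  rewrite GS_zero /=; have := sig1_refl hSig (Lp_K k 0%N hk); exact.
rewrite GS_succ; by have [] := glueP hglue (G_hyp k m' hk).
Qed.

Lemma G_K k m : (k <= n)%N -> K (G k m).
Proof. by move=> hk; apply: (sigK hSig (GS_fin k m) (GS_K k m hk) (G_sig k m hk)). Qed.

Lemma G_fin k m : (k <= n)%N -> snor (G k m) <> +oo.
Proof.
move=> hk; case: m => [|m']; first exact: Lp_fin k 0%N hk.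
apply: (sig_fin hH hK hSig (GS_fin k m'.+1) (GS_K k m'.+1 hk) (G_sig k m'.+1 hk) (m := Pc k m'.*2.+1)).
  by exists m'.*2.+1 => //; rewrite /Aset /mkset; lia.
by rewrite Pc_odd; apply: Rp_fin k m' hk.
Qed.

Lemma G_dom k m x : (k <= n)%N -> sdom (G k m) x <-> Dset m x.
Proof.
move=> hk; rewrite (sig_dom hSig (GS_fin k m) (GS_K k m hk) (G_sig k m hk)); split.
- move=> [s [i hi <-] hx]; move: hi; rewrite /Aset /mkset => hi.
  have hC := Pc_sub k i x hk hx.
  have nu : ~ pdom u x.
    have [l _ hl] := (C_dom k _ x hk).1 hC.
    exact: (cov k x hk).2 (ex_intro _ l hl).
  split => //.
  have [he1 he2] := andP (C_Eb k _ x hk hC).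
  move: hx; rewrite /Pc; have := odd_double_half i; case: (odd i) => /= hoi.
  + move=> /(Rp_dom k _ x hk) [_ ge].
    have -> : m = (i./2).+1 by lia.
    by apply/andP; split.
  + move=> /(Lp_dom k _ x hk) [_ lt].
    have -> : m = i./2 by lia.
    by apply/andP; split.
- move=> [nu hm].
  have [l hl] := (cov k x hk).1 nu.
  have [j hj] := find_interval (E := aseq) l (erefl _) a_lt.
  have hC : sdom (C k j) x by apply/(C_dom k j x hk); exists l.
  have [he1 he2] := andP (C_Eb k _ x hk hC).
  case: (ltnP x (e j)) => hx.
  + have mj : m = j by apply: (Eb_uniq m j x hm); apply/andP; split.
    exists (Lp k j); last by apply/(Lp_dom k j x hk).
    exists j.*2; first by rewrite /Aset /mkset mj; lia.
    exact: Pc_even.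
  + have mj : m = j.+1 by apply: (Eb_uniq m j.+1 x hm); apply/andP; split.
    exists (Rp k j); last by apply/(Rp_dom k j x hk).
    exists j.*2.+1; first by rewrite /Aset /mkset mj; lia.
    exact: Pc_odd.
Qed.


Lemma G_lb k m (Z : R) : (k <= n)%N ->
  (forall l, (aseq m.-1 <= l)%N -> Z%:E <= snor (t k l)) -> (Z - 1 - 1 - 1)%:E <= snor (G k m).
Proof.
move=> hk; case: m => [|m'] hZ /=.
  have [h1 _] := LR_lb k 0%N Z hk hZ.
  apply: le_trans h1; rewrite lee_fin; exact: le3.
have [_ h] := glueP hglue (G_hyp k m' hk); apply: (lb_sub1 h).
apply: lb_bigmin => i; apply: (Pc_lb k _ Z hk) => l hl; apply: hZ.
apply: leq_trans hl; apply: a_le; lia.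
Qed.

Definition T m := chain (link hlink) (fun k => G k m) n.

Lemma T_props m (Z : R) :
  (forall k, (k <= n)%N -> forall l, (aseq m.-1 <= l)%N -> Z%:E <= snor (t k l)) ->
  (1 < Z - 3 - n%:R)%R ->
  [/\ K (T m), sdom (T m) = Dset m, (Z - 3 - n%:R)%:E <= snor (T m) &
      forall k, (k <= n)%N -> Sig [set G k m] (T m)].
Proof.
move=> hZ h1.
have hg : forall k, (k <= n)%N ->
    [/\ K (G k m), sdom (G k m) = Dset m & (Z - 3)%:E <= snor (G k m)].
  move=> k hk; split; first exact: G_K k m hk.
    by apply/seteqP; split => x /(G_dom k m x hk).
  rewrite three; exact: G_lb k m Z hk (hZ k hk).
have := chainP hSig hlink (g := fun k => G k m) (Dm := Dset m) (Z := (Z - 3)%R) hg h1 (leqnn n).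
by case=> KT dT nT sT; split.
Qed.

Lemma T_M m : [/\ K (T m), sdom (T m) = Dset m, (M - 3 - n%:R)%:E <= snor (T m) &
      forall k, (k <= n)%N -> Sig [set G k m] (T m)].
Proof. exact: T_props m M (fun k hk l _ => Mlev k l hk) (hM3 hM (lexx M)). Qed.

Lemma T_fin m : snor (T m) <> +oo.
Proof.
have [_ _ _ sT] := T_M m.
exact: (sig1_fin hH hK hSig (G_K 0%N m (leq0n n)) (sT 0%N (leq0n n)) (G_fin 0%N m (leq0n n))).
Qed.

Lemma orig_lb (Z : R) : exists I, forall k, (k <= n)%N -> forall l, (I <= l)%N ->
  Z%:E <= snor (t k l).
Proof.
apply: (unif (P := fun k I => forall l, (I <= l)%N -> Z%:E <= snor (t k l))).
  move=> k I J IJ h l hl; apply: h; exact: leq_trans IJ hl.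
move=> k hk; have [_ _ _ _ [_ _ lim]] := hp k hk; exact: lb_cvg lim Z.
Qed.

Lemma c_cond k : (k <= n)%N -> is_cond K (Cond u (C k)).
Proof.
move=> hk; have [fw _ _ _ _] := hp k hk; split => /=.
- by rewrite -(hu k hk).
- by move=> j; apply: C_K k j hk.
- move=> j j' ne; apply/seteqP; split => // x [h1 h2]; exact: (C_disj k j j' x hk ne h1 h2).
- move=> j; apply/seteqP; split => // x [ux hx].
  have [l _ hl] := (C_dom k j x hk).1 hx.
  exact: ((cov k x hk).2 (ex_intro _ l hl)).
- split.
  + move=> x; case: (pselect (pdom u x)) => [ux|nux]; first by left.
    right; have [l hl] := (cov k x hk).1 nux.
    have [j hj] := find_interval (E := aseq) l (erefl _) a_lt.
    exists j; apply/(C_dom k j x hk); by exists l.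
  + by move=> j; apply: C_fin k j hk.
  + apply: cvg_lb => Y; have [I hI] := orig_lb (Y + 1).
    exists I => j hj.
    have := C_lb k j (Y + 1) hk (fun l hl => hI k hk l (leq_trans hj (leq_trans (a_ge j) hl))).
    by rewrite addrK.
Qed.

Lemma c'_cond k : (k <= n)%N -> is_cond K (Cond u (Pc k)).
Proof.
move=> hk; have [fw _ _ _ _] := hp k hk; split => /=.
- by rewrite -(hu k hk).
- by move=> i; apply: Pc_K k i hk.
- move=> i i' ne; apply/seteqP; split => // x [h1 h2]; exact: (Pc_disj k i i' x hk ne h1 h2).
- move=> i; apply/seteqP; split => // x [ux hx].
  have [l _ hl] := (C_dom k _ x hk).1 (Pc_sub k i x hk hx).
  exact: ((cov k x hk).2 (ex_intro _ l hl)).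
- split.
  + move=> x; case: (pselect (pdom u x)) => [ux|nux]; first by left.
    right; have [l hl] := (cov k x hk).1 nux.
    have [j hj] := find_interval (E := aseq) l (erefl _) a_lt.
    have hC : sdom (C k j) x by apply/(C_dom k j x hk); exists l.
    case: (ltnP x (e j)) => hx.
      by exists j.*2; rewrite Pc_even; apply/(Lp_dom k j x hk).
    by exists j.*2.+1; rewrite Pc_odd; apply/(Rp_dom k j x hk).
  + by move=> i; apply: Pc_fin k i hk.
  + apply: cvg_lb => Y; have [I hI] := orig_lb (Y + 1 + 1).
    exists I.*2 => i hi.
    have hI2 : (I <= aseq i./2)%N by apply: (leq_trans _ (a_ge i./2)); lia.
    have := Pc_lb k i (Y + 1 + 1) hk (fun l hl => hI k hk l (leq_trans hI2 hl)).
    by rewrite !addrK.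
Qed.

Lemma r_cond : is_cond K (Cond u T).
Proof.
have [fw _ _ _ _] := hp 0%N (leq0n n); split => /=.
- by rewrite -(hu 0%N (leq0n n)).
- by move=> m; have [] := T_M m.
- move=> m m' ne; apply/seteqP; split => // x [h1 h2].
  have [_ d1 _ _] := T_M m; have [_ d2 _ _] := T_M m'.
  rewrite d1 in h1; rewrite d2 in h2.
  apply: ne; exact: (Eb_uniq m m' x h1.2 h2.2).
- move=> m; apply/seteqP; split => // x [ux hx].
  have [_ d1 _ _] := T_M m; rewrite d1 in hx; exact: hx.1 ux.
- split.
  + move=> x; case: (pselect (pdom u x)) => [ux|nux]; first by left.
    right; have [m hm] := find_interval (E := Eb) x (erefl _) Eb_lt.
    exists m; have [_ -> _ _] := T_M m; by split.
  + move=> m; exact: T_fin m.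
  + apply: cvg_lb => Y; pose Z := Num.max M (Y + 3 + n%:R)%R.
    have [I hI] := orig_lb Z.
    exists I.+1 => m hm.
    have hZ : forall k, (k <= n)%N -> forall l, (aseq m.-1 <= l)%N -> Z%:E <= snor (t k l).
      move=> k hk l hl.
      have h2 : (I <= aseq m.-1)%N by apply: (leq_trans _ (a_ge m.-1)); lia.
      exact: (hI k hk l (leq_trans h2 hl)).
    have hMZ : (M <= Z)%R by rewrite /Z le_max lexx.
    have [_ _ h _] := T_props m Z hZ (hM3 hM hMZ).
    apply: le_trans h; rewrite lee_fin; apply: lbY.
    by rewrite /Z le_max lexx orbT.
Qed.

Lemma step1 k : (k <= n)%N -> one_op K Sig Sb (p k) (Cond u (C k)).
Proof.
move=> hk; split; [exact: hp k hk | exact: c_cond k hk | right; left].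
split; first by rewrite /= (hu k hk).
exists (fun j => [set i | (aseq j <= i < aseq j + (len j).+1)%N]); split.
- move=> j; apply: (@ub_finite _ (aseq j + (len j).+1)) => i; rewrite /mkset => /andP [_ h]; exact: h.
- move=> j j' ne; apply/seteqP; split => // i [].
  rewrite /mkset !a_len => /andP [h1 h2] /andP [h1' h2'].
  case: (ltngtP j j') => hjj //.
  + have := a_le _ _ (hjj : (j.+1 <= j')%N); lia.
  + have := a_le _ _ (hjj : (j'.+1 <= j)%N); lia.
- move=> j; rewrite img_interval; exact: C_sig k j hk.
Qed.

Lemma step2 k : (k <= n)%N -> one_op K Sig Sb (Cond u (C k)) (Cond u (Pc k)).
Proof.
move=> hk; split; [exact: c_cond k hk | exact: c'_cond k hk | right; right].
split => //.
exists (fun j => [set i | (j.*2 <= i <= j.*2.+1)%N]); split.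
- move=> j; split.
    apply: (@ub_finite _ j.*2.+2) => i; rewrite /mkset => /andP [_ h]; exact: h.
  by exists j.*2; rewrite /mkset leqnn leqnSn.
- move=> j j' ne; apply/seteqP; split => // i []; rewrite /mkset => /andP [h1 h2] /andP [h1' h2'].
  apply: ne; lia.
- move=> j /=.
  have -> : Pc k @` [set i | (j.*2 <= i <= j.*2.+1)%N] = [set Lp k j; Rp k j].
    apply/seteqP; split => s.
      move=> [i hi <-]; move: hi; rewrite /mkset => /andP [h1 h2].
      have [->|->] : i = j.*2 \/ i = j.*2.+1 by lia.
        by left; rewrite Pc_even.
      by right; rewrite Pc_odd.
    case=> ->.
      by exists j.*2; [rewrite /mkset leqnn leqnSn | rewrite Pc_even].
    by exists j.*2.+1; [rewrite /mkset leqnSn leqnn | rewrite Pc_odd].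
  exact: LR_sb k j hk.
Qed.

Lemma step3 k : (k <= n)%N -> one_op K Sig Sb (Cond u (Pc k)) (Cond u T).
Proof.
move=> hk; split; [exact: c'_cond k hk | exact: r_cond | right; left].
split => //; exists Aset; split.
- move=> m; apply: (@ub_finite _ m.*2.+1) => i; rewrite /Aset /mkset => /andP [_ h]; exact: h.
- move=> m m' ne; apply/seteqP; split => // i []; rewrite /Aset /mkset => /andP [h1 h2] /andP [h1' h2'].
  apply: ne; lia.
- move=> m /=; have [_ _ _ sT] := T_M m.
  exact: (trans1 hSig (GS_fin k m) (GS_K k m hk) (G_sig k m hk) (sT k hk)).
Qed.

Lemma combine : exists r, is_cond K r /\ forall k, (k <= n)%N -> Qle K Sig Sb (p k) r.
Proof.
exists (Cond u T); split; first exact: r_cond.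
move=> k hk; rewrite /Qle.
apply: rt_trans; last by apply: rt_step; exact: step3 k hk.
apply: rt_trans; last by apply: rt_step; exact: step2 k hk.
by apply: rt_step; exact: step1 k hk.
Qed.

End Comb.

Theorem theorem2p4 (R : realType) (H : nat -> countType) (D : Type)
    (K : set (screature R H D))
    (Sig : set (screature R H D) -> set (screature R H D))
    (Sb : screature R H D -> set (set (screature R H D))) :
  (forall i, exists x y : H i, x <> y) ->
  semi_creating_triple K Sig Sb ->
  linked K Sig -> semi_gluing K Sig -> cutting_property K Sb ->
  sigma_star_linked (is_cond K) (Qle K Sig Sb).
Proof.
move=> hH [hK hSig hSb] hlink hglue hcut n.
pose M : R := (n%:R + 5)%R.
have hM : (n%:R + 4 < M)%R by rewrite /M ltrD2l ltr_nat.
pose good (q p' : cond R H D) := Qle K Sig Sb q p' /\ is_cond K p' /\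
  (forall i, M%:E < snor (ct p' i)).
have gex : forall q, exists p', is_cond K q -> good q p'.
  move=> q; case: (pselect (is_cond K q)) => [cq|ncq]; last by exists q.
  have [p' hp'] := decide_exists Sig Sb hK M cq; by exists p'.
have [f hf] := choice gex.
pose code q := enc (cw (f q)).
exists (fun i => [set q | is_cond K q /\ code q = i]); split.
- by move=> i q [].
- apply/seteqP; split => q; first by move=> [i _ []].
  by move=> cq; exists (code q).
- move=> i j ne; apply/seteqP; split => // q [[_ h1] [_ h2]]; apply: ne; by rewrite -h1 -h2.
- move=> i q hq.
  have hq' : forall k, (k <= n)%N -> is_cond K (q k) by move=> k /hq [].
  pose p k := f (q k).
  have hgood : forall k, (k <= n)%N -> good (q k) (p k) by move=> k hk; exact: hf _ (hq' k hk).
  have hp : forall k, (k <= n)%N -> is_cond K (p k) by move=> k /hgood [_ []].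
  have hu : forall k, (k <= n)%N -> cw (p k) = cw (p 0%N).
    move=> k hk; apply: enc_inj.
    - by have [] := hp k hk.
    - by have [] := hp 0%N (leq0n n).
    have [_ e1] := hq k hk; have [_ e0] := hq 0%N (leq0n n).
    by rewrite /code in e1 e0; rewrite e1 e0.
  have hnor : forall k l, (k <= n)%N -> M%:E < snor (ct (p k) l).
    by move=> k l /hgood [_ [_ h]].
  have [r [cr hr]] := combine R H D K Sig Sb hH hK hSig hSb hlink hglue hcut n
    (cw (p 0%N)) p hp hu M hM hnor.
  exists r; split => // k hk; apply: rt_trans (hr k hk).
  by have [] := hgood k hk.
Qed.
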